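(* A matrix $H_0\in\mathbb{C}^{3\times 3}$ is Hermitian, positive semidefinite and satisfies $H_0 H_0^T = 0_{3\times3}$ if and only if either $H_0=0$ or there exist $a,b,c\in\mathbb{R}$, not all zero, such that, with $x=\sqrt{a^2+b^2+c^2}$, $$H_0=\frac{1}{x}\begin{pmatrix} a^2+b^2 & bc+iax & -ac+ibx\\ bc-iax & a^2+c^2 & ab+icx\\ -ac-ibx & ab-icx & b^2+c^2\end{pmatrix}.$$
   Context: $^T$ denotes transpose (no conjugation). *)

(* Defs.v *)
(* The complex field C is modelled as R[i] (mathcomp-real-closed
   `complex`) over an arbitrary R : realType (a model of the real numbers). *)
From HB Require Import structures.
From mathcomp Require Import all_boot all_order all_algebra.
From mathcomp Require Import reals.
From mathcomp Require Export complex.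
Set Implicit Arguments. Unset Strict Implicit. Unset Printing Implicit Defensive.
Import Order.TTheory GRing.Theory Num.Theory.
Local Open Scope ring_scope.
Local Open Scope complex_scope.

Definition conjT {C : numClosedFieldType} (m n : nat) (M : 'M[C]_(m, n)) : 'M[C]_(n, m) :=
  (map_mx Num.conj M)^T.

Definition is_hermitian {C : numClosedFieldType} (n : nat) (M : 'M[C]_n) : Prop :=
  conjT M = M.

(* positive semidefinite: v^* M v >= 0 (i.e. real and nonnegative) for all v *)
Definition is_psd {C : numClosedFieldType} (n : nat) (M : 'M[C]_n) : Prop :=
  forall v : 'cV[C]_n, 0 <= (conjT v *m M *m v) 0 0.

(* the explicit 3x3 matrix of the statement (before the 1/x factor),
   with x = sqrt(a^2+b^2+c^2); entries written as Re +i* Im *)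
Definition Hmat {R : rcfType} (a b c : R) : 'M[R[i]]_3 :=
  let x := Num.sqrt (a ^+ 2 + b ^+ 2 + c ^+ 2) in
  let rows : seq (seq R[i]) :=
    [:: [:: (a ^+ 2 + b ^+ 2) +i* 0; (b * c) +i* (a * x); (- (a * c)) +i* (b * x)];
        [:: (b * c) +i* (- (a * x)); (a ^+ 2 + c ^+ 2) +i* 0; (a * b) +i* (c * x)];
        [:: (- (a * c)) +i* (- (b * x)); (a * b) +i* (- (c * x)); (b ^+ 2 + c ^+ 2) +i* 0]] in
  \matrix_(i < 3, j < 3) nth 0 (nth [::] rows i) j.

(* Main.v *)
Require Import Defs.
From HB Require Import structures.
From mathcomp Require Import all_boot all_order all_algebra.
From mathcomp Require Import reals complex.
From mathcomp Require Import ring lra.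
Import Order.TTheory GRing.Theory Num.Theory.
Local Open Scope ring_scope.
Local Open Scope complex_scope.

Notation cRe := complex.Re.
Notation cIm := complex.Im.

Lemma conjE (R : rcfType) (x : R[i]) : Num.conj x = conjc x.
Proof. by []. Qed.

Definition i0 : 'I_3 := @Ordinal 3 0 isT.
Definition i1 : 'I_3 := @Ordinal 3 1 isT.
Definition i2 : 'I_3 := @Ordinal 3 2 isT.

Lemma sum3 (V : nmodType) (F : 'I_3 -> V) : \sum_(k < 3) F k = F i0 + F i1 + F i2.
Proof.
rewrite !big_ord_recl big_ord0 addr0 addrA /=.
by congr (F _ + F _ + F _); apply: val_inj.
Qed.

Lemma ord3P (i : 'I_3) : i = i0 \/ i = i1 \/ i = i2.
Proof.
case: i => [[|[|[|i]]] hi] //.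
- by left; apply: val_inj.
- by right; left; apply: val_inj.
- by right; right; apply: val_inj.
Qed.

Lemma ord1P (i : 'I_1) : i = ord0.
Proof. by case: i => [[|i] hi] //; apply: val_inj. Qed.

Definition Hform {R : rcfType} (d1 d2 d3 p a q b r c : R) : 'M[R[i]]_3 :=
  \matrix_(i < 3, j < 3) nth 0 (nth [::]
   [:: [:: d1 +i* 0; p +i* a; q +i* b];
       [:: p +i* (-a); d2 +i* 0; r +i* c];
       [:: q +i* (-b); r +i* (-c); d3 +i* 0]] i) j.

Lemma herm_form {R : rcfType} {H : 'M[R[i]]_3} : is_hermitian H ->
  exists d1 d2 d3 p a q b r c, H = Hform d1 d2 d3 p a q b r c.
Proof.
move=> hH.
have hE : forall i j, conjc (H j i) = H i j.
  by move=> i j; move/matrixP: hH => /(_ i j); rewrite !mxE.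
have d0 : forall i, H i i = cRe (H i i) +i* 0.
  move=> i; have := hE i i; case: (H i i) => x y [] /= hy.
  by congr (_ +i* _); lra.
exists (cRe (H i0 i0)), (cRe (H i1 i1)), (cRe (H i2 i2)),
  (cRe (H i0 i1)), (cIm (H i0 i1)), (cRe (H i0 i2)), (cIm (H i0 i2)),
  (cRe (H i1 i2)), (cIm (H i1 i2)).
apply/matrixP => i j; rewrite mxE.
have cE : forall z : R[i], z = cRe z +i* cIm z by case.
case: (ord3P i) => [->|[->|->]]; case: (ord3P j) => [->|[->|->]] /=.
- exact: d0.
- exact: cE.
- exact: cE.
- by rewrite -hE; case: (H _ _).
- exact: d0.
- exact: cE.
- by rewrite -hE; case: (H _ _).
- by rewrite -hE; case: (H _ _).
- exact: d0.
Qed.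

Lemma lin_step {R : comPzRingType} (c : R) {E G : R} : E = 0 -> G - c * E = 0 -> G = 0.
Proof. by move=> -> ; rewrite mulr0 subr0. Qed.

Lemma sq3 {R : rcfType} {u v w : R} : u^+2 + v^+2 + w^+2 = 0 -> u = 0 /\ v = 0 /\ w = 0.
Proof.
move=> h.
have hu := sqr_ge0 u; have hv := sqr_ge0 v; have hw := sqr_ge0 w.
have eu : u^+2 = 0 by lra.
have ev : v^+2 = 0 by lra.
have ew : w^+2 = 0 by lra.
move/eqP: eu; move/eqP: ev; move/eqP: ew; rewrite !sqrf_eq0.
by move=> /eqP -> /eqP -> /eqP ->.
Qed.

Lemma row_zero {R : rcfType} {x Qv n0 n1 n2 : R} : 0 < x -> 0 <= Qv ->
  Qv + x * (n0^+2 + n1^+2 + n2^+2) = 0 -> n0 = 0 /\ n1 = 0 /\ n2 = 0.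
Proof.
move=> xp qp h; apply: sq3.
have s0 : 0 <= n0^+2 + n1^+2 + n2^+2 by rewrite !addr_ge0 ?sqr_ge0.
have m0 : 0 <= x * (n0^+2 + n1^+2 + n2^+2) by rewrite mulr_ge0 // ltW.
have : x * (n0^+2 + n1^+2 + n2^+2) = 0 by lra.
by move/eqP; rewrite mulf_eq0 (gt_eqF xp) /= => /eqP.
Qed.

Definition qf {R : rcfType} (d1 d2 d3 p q r n0 n1 n2 : R) :=
  n0*(d1*n0 + p*n1 + q*n2) + n1*(p*n0 + d2*n1 + r*n2) + n2*(q*n0 + r*n1 + d3*n2).

Lemma real_main {R : rcfType} {d1 d2 d3 p a q b r c : R} :
  d1^+2 + p^+2 + q^+2 - (a^+2 + b^+2) = 0 ->
  d1 * p + p * d2 + q * r - b * c = 0 ->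
  d1 * q + p * r + q * d3 + a * c = 0 ->
  p^+2 + d2^+2 + r^+2 - (a^+2 + c^+2) = 0 ->
  p * q + d2 * r + r * d3 - a * b = 0 ->
  q^+2 + r^+2 + d3^+2 - (b^+2 + c^+2) = 0 ->
  (forall n0 n1 n2, 0 <= qf d1 d2 d3 p q r n0 n1 n2) ->
  a^+2 + b^+2 + c^+2 != 0 ->
  let x := Num.sqrt (a^+2 + b^+2 + c^+2) in
  x * d1 = a^+2+b^+2 /\ x * p = b * c /\ x * q = -(a * c) /\ x * d2 = a^+2+c^+2 /\
      x * r = a * b /\ x * d3 = b^+2+c^+2.
Proof.
move=> h00 h01 h02 h11 h12 h22 hq nz x.
have X2ge : 0 <= a^+2 + b^+2 + c^+2 by rewrite !addr_ge0 ?sqr_ge0.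
have X2gt : 0 < a^+2 + b^+2 + c^+2 by rewrite lt_def nz.
have xpos : 0 < x by rewrite sqrtr_gt0.
have hx2 : x^+2 - (a^+2 + b^+2 + c^+2) = 0 by rewrite sqr_sqrtr // subrr.
have hw : (a * q - b * p + c * d1)^+2 + (a * r - b * d2 + c * p)^+2 + (a * d3 - b * r + c * q)^+2 = 0.
  apply: (lin_step (c^+2) h00). apply: (lin_step (- 2 * b * c) h01). apply: (lin_step (2 * a * c) h02). apply: (lin_step (b^+2) h11). apply: (lin_step (- 2 * a * b) h12). apply: (lin_step (a^+2) h22). ring.
have [w0 [w1 w2]] := sq3 hw.
have e0 : qf d1 d2 d3 p q r (- a^+2 - b^+2 + d1 * x) (- b * c + p * x) (a * c + q * x) + x * ((- a^+2 - b^+2 + d1 * x)^+2 + (- b * c + p * x)^+2 + (a * c + q * x)^+2) = 0.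
  rewrite /qf; apply: (lin_step ((- a^+2 - b^+2 + d1 * x) * x) h00). apply: (lin_step ((- b * c + p * x) * x) h01). apply: (lin_step ((a * c + q * x) * x) h02). apply: (lin_step (a * c * q - a^+2 * d1 - b * c * p - b^+2 * d1 + d1^+2 * x + p^+2 * x + q^+2 * x) hx2). apply: (lin_step ((- a^+2 - b^+2 + d1 * x) * (c)) w0). apply: (lin_step ((- b * c + p * x) * (c)) w1). apply: (lin_step ((a * c + q * x) * (c)) w2). ring.
have [r00 [r01 r02]] := row_zero xpos (hq _ _ _) e0.
have e1 : qf d1 d2 d3 p q r (- b * c + p * x) (- a^+2 - c^+2 + d2 * x) (- a * b + r * x) + x * ((- b * c + p * x)^+2 + (- a^+2 - c^+2 + d2 * x)^+2 + (- a * b + r * x)^+2) = 0.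
  rewrite /qf; apply: (lin_step ((- b * c + p * x) * x) h01). apply: (lin_step ((- a^+2 - c^+2 + d2 * x) * x) h11). apply: (lin_step ((- a * b + r * x) * x) h12). apply: (lin_step (- a * b * r - a^+2 * d2 - b * c * p - c^+2 * d2 + d2^+2 * x + p^+2 * x + r^+2 * x) hx2). apply: (lin_step ((- b * c + p * x) * (- b)) w0). apply: (lin_step ((- a^+2 - c^+2 + d2 * x) * (- b)) w1). apply: (lin_step ((- a * b + r * x) * (- b)) w2). ring.
have [r10 [r11 r12]] := row_zero xpos (hq _ _ _) e1.
have e2 : qf d1 d2 d3 p q r (a * c + q * x) (- a * b + r * x) (- b^+2 - c^+2 + d3 * x) + x * ((a * c + q * x)^+2 + (- a * b + r * x)^+2 + (- b^+2 - c^+2 + d3 * x)^+2) = 0.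
  rewrite /qf; apply: (lin_step ((a * c + q * x) * x) h02). apply: (lin_step ((- a * b + r * x) * x) h12). apply: (lin_step ((- b^+2 - c^+2 + d3 * x) * x) h22). apply: (lin_step (- a * b * r + a * c * q - b^+2 * d3 - c^+2 * d3 + d3^+2 * x + q^+2 * x + r^+2 * x) hx2). apply: (lin_step ((a * c + q * x) * (a)) w0). apply: (lin_step ((- a * b + r * x) * (a)) w1). apply: (lin_step ((- b^+2 - c^+2 + d3 * x) * (a)) w2). ring.
have [r20 [r21 r22]] := row_zero xpos (hq _ _ _) e2.
do !split.
- apply/eqP; rewrite -subr_eq0 mulrC; apply/eqP; rewrite -[RHS]r00; ring.
- apply/eqP; rewrite -subr_eq0 mulrC; apply/eqP; rewrite -[RHS]r01; ring.
- apply/eqP; rewrite -subr_eq0 mulrC; apply/eqP; rewrite -[RHS]r02; ring.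
- apply/eqP; rewrite -subr_eq0 mulrC; apply/eqP; rewrite -[RHS]r11; ring.
- apply/eqP; rewrite -subr_eq0 mulrC; apply/eqP; rewrite -[RHS]r12; ring.
- apply/eqP; rewrite -subr_eq0 mulrC; apply/eqP; rewrite -[RHS]r22; ring.
Qed.

Lemma cplx0 {R : pzRingType} (x y : R) : x +i* y = 0 -> x = 0 /\ y = 0.
Proof. by case. Qed.

Lemma hht_eqs {R : rcfType} {d1 d2 d3 p a q b r c : R} :
  let H := Hform d1 d2 d3 p a q b r c in H *m H^T = 0 ->
  [/\ d1^+2 + p^+2 + q^+2 - (a^+2 + b^+2) = 0,
      d1 * p + p * d2 + q * r - b * c = 0,
      d1 * q + p * r + q * d3 + a * c = 0 &
  [/\ p^+2 + d2^+2 + r^+2 - (a^+2 + c^+2) = 0,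
      p * q + d2 * r + r * d3 - a * b = 0 &
      q^+2 + r^+2 + d3^+2 - (b^+2 + c^+2) = 0]].
Proof.
move=> H /matrixP hT.
have e : forall j k, (H *m H^T) j k = 0 by move=> j k; rewrite hT mxE.
move: (e i0 i0) (e i0 i1) (e i0 i2) (e i1 i1) (e i1 i2) (e i2 i2).
rewrite !mxE !sum3 !mxE /=.
simpc.
move=> /cplx0 [e00 _] /cplx0 [e01 _] /cplx0 [e02 _] /cplx0 [e11 _] /cplx0 [e12 _] /cplx0 [e22 _].
split; [apply: (lin_step 1 e00) | apply: (lin_step 1 e01) | apply: (lin_step 1 e02) | split].
- ring.
- ring.
- ring.
- apply: (lin_step 1 e11); ring.
- apply: (lin_step 1 e12); ring.
- apply: (lin_step 1 e22); ring.
Qed.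

Definition rvec {R : rcfType} (n0 n1 n2 : R) : 'cV[R[i]]_3 :=
  \matrix_(i < 3, j < 1) (nth 0 [:: n0; n1; n2] i +i* 0).

Lemma psd_real {R : rcfType} {d1 d2 d3 p a q b r c : R} :
  is_psd (Hform d1 d2 d3 p a q b r c) ->
  forall n0 n1 n2, 0 <= qf d1 d2 d3 p q r n0 n1 n2.
Proof.
move=> hP n0 n1 n2; have := hP (rvec n0 n1 n2).
rewrite !mxE !sum3 !mxE !sum3 !mxE /= !conjE.
simpc.
move=> /andP [_ h]; rewrite /qf.
apply: le_trans h _; rewrite le_eqVlt; apply/orP; left; apply/eqP; ring.
Qed.

Lemma ceq {R : pzRingType} (a b c d : R) : a = c -> b = d -> a +i* b = c +i* d.
Proof. by move=> -> ->. Qed.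

Lemma scaleC {R : rcfType} (x u v : R) :
  (x%:C)^-1 * (u +i* v) = (x^-1 * u) +i* (x^-1 * v).
Proof. by rewrite -fmorphV /real_complex_def; simpc. Qed.

Lemma forward (R : rcfType) (H0 : 'M[R[i]]_3) :
  is_hermitian H0 -> is_psd H0 -> H0 *m H0^T = 0 ->
  (H0 = 0 \/
   exists a b c : R, ~ (a = 0 /\ b = 0 /\ c = 0) /\
     H0 = ((Num.sqrt (a ^+ 2 + b ^+ 2 + c ^+ 2))%:C)^-1 *: Hmat a b c).
Proof.
move=> hH hP hT.
have [d1 [d2 [d3 [p [a [q [b [r [c E]]]]]]]]] := herm_form hH; subst H0.
have [h00 h01 h02 [h11 h12 h22]] := hht_eqs hT.
have hq := psd_real hP.
case: (eqVneq (a^+2+b^+2+c^+2) 0) => [X0|nz].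
- left.
  have [a0 [b0 c0]] := sq3 X0; subst a b c.
  have [z1 [z2 z3]] : d1 = 0 /\ p = 0 /\ q = 0.
    by apply: sq3; apply: (lin_step 1 h00); ring.
  subst d1 p q.
  have [z4 [z5 z6]] : d2 = 0 /\ r = 0 /\ (0:R) = 0.
    by apply: sq3; apply: (lin_step 1 h11); ring.
  subst d2 r.
  have [z7 [z8 z9]] : d3 = 0 /\ (0:R) = 0 /\ (0:R) = 0.
    by apply: sq3; apply: (lin_step 1 h22); ring.
  subst d3.
  apply/matrixP => i j; rewrite !mxE.
  by case: (ord3P i) => [->|[->|->]]; case: (ord3P j) => [->|[->|->]] /=;
    rewrite ?oppr0.
- right; exists a, b, c; split.
    by move=> [a0 [b0 c0]]; move: nz; rewrite a0 b0 c0 expr0n /= !addr0 eqxx.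
  have := real_main h00 h01 h02 h11 h12 h22 hq nz.
  set x := Num.sqrt _ => -[k00 [k01 [k02 [k11 [k12 k22]]]]].
  have X2gt : 0 < a^+2 + b^+2 + c^+2.
    by rewrite lt_def nz /= !addr_ge0 ?sqr_ge0.
  have xnz : x != 0 by rewrite gt_eqF // sqrtr_gt0.
  apply/matrixP => i j; rewrite !mxE.
  case: (ord3P i) => [->|[->|->]]; case: (ord3P j) => [->|[->|->]] /=;
    rewrite scaleC; apply: ceq;
    rewrite -/x; first [ by rewrite -k00; field | by rewrite -k01; field
       | by rewrite -k02; field | by rewrite -k11; field | by rewrite -k12; field
       | by rewrite -k22; field | by field ].
Qed.

Lemma Hmat_MMT {R : rcfType} (a b c : R) : Hmat a b c *m (Hmat a b c)^T = 0.
Proof.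
have X2ge : 0 <= a^+2 + b^+2 + c^+2 by rewrite !addr_ge0 ?sqr_ge0.
apply/matrixP => i j; rewrite !mxE sum3 !mxE.
set x := Num.sqrt _.
have hx2 : x^+2 - (a^+2 + b^+2 + c^+2) = 0 by rewrite sqr_sqrtr // subrr.
case: (ord3P i) => [->|[->|->]]; case: (ord3P j) => [->|[->|->]] /=;
  rewrite -/x; simpc; apply: ceq.
all: apply/eqP; rewrite -subr_eq0; apply/eqP.
- apply: (lin_step (- a^+2 - b^+2) hx2); ring.
- apply: (lin_step 0 hx2); ring.
- apply: (lin_step (- b * c) hx2); ring.
- apply: (lin_step 0 hx2); ring.
- apply: (lin_step (a * c) hx2); ring.
- apply: (lin_step 0 hx2); ring.
- apply: (lin_step (- b * c) hx2); ring.
- apply: (lin_step 0 hx2); ring.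
- apply: (lin_step (- a^+2 - c^+2) hx2); ring.
- apply: (lin_step 0 hx2); ring.
- apply: (lin_step (- a * b) hx2); ring.
- apply: (lin_step 0 hx2); ring.
- apply: (lin_step (a * c) hx2); ring.
- apply: (lin_step 0 hx2); ring.
- apply: (lin_step (- a * b) hx2); ring.
- apply: (lin_step 0 hx2); ring.
- apply: (lin_step (- b^+2 - c^+2) hx2); ring.
- apply: (lin_step 0 hx2); ring.
Qed.

Lemma Hmat_MM {R : rcfType} (a b c : R) :
  Hmat a b c *m Hmat a b c =
  (2 * (Num.sqrt (a^+2 + b^+2 + c^+2))^+2)%:C *: Hmat a b c.
Proof.
have X2ge : 0 <= a^+2 + b^+2 + c^+2 by rewrite !addr_ge0 ?sqr_ge0.
apply/matrixP => i j; rewrite !mxE sum3 !mxE.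
set x := Num.sqrt _.
have hx2 : x^+2 - (a^+2 + b^+2 + c^+2) = 0 by rewrite sqr_sqrtr // subrr.
rewrite /real_complex_def.
case: (ord3P i) => [->|[->|->]]; case: (ord3P j) => [->|[->|->]] /=;
  rewrite -/x; simpc; apply: ceq.
all: apply/eqP; rewrite -subr_eq0; apply/eqP.
- apply: (lin_step (- a^+2 - b^+2) hx2); ring.
- apply: (lin_step 0 hx2); ring.
- apply: (lin_step (- b * c) hx2); ring.
- apply: (lin_step (- 2 * a * x) hx2); ring.
- apply: (lin_step (a * c) hx2); ring.
- apply: (lin_step (- 2 * b * x) hx2); ring.
- apply: (lin_step (- b * c) hx2); ring.
- apply: (lin_step (2 * a * x) hx2); ring.
- apply: (lin_step (- a^+2 - c^+2) hx2); ring.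
- apply: (lin_step 0 hx2); ring.
- apply: (lin_step (- a * b) hx2); ring.
- apply: (lin_step (- 2 * c * x) hx2); ring.
- apply: (lin_step (a * c) hx2); ring.
- apply: (lin_step (2 * b * x) hx2); ring.
- apply: (lin_step (- a * b) hx2); ring.
- apply: (lin_step (2 * c * x) hx2); ring.
- apply: (lin_step (- b^+2 - c^+2) hx2); ring.
- apply: (lin_step 0 hx2); ring.
Qed.

Lemma conjT_mul {R : rcfType} m n p (A : 'M[R[i]]_(m, n)) (B : 'M[R[i]]_(n, p)) :
  conjT (A *m B) = conjT B *m conjT A.
Proof. by rewrite /conjT map_mxM trmx_mul. Qed.

Lemma backward {R : rcfType} (a b c : R) : ~ (a = 0 /\ b = 0 /\ c = 0) ->
  let H := ((Num.sqrt (a ^+ 2 + b ^+ 2 + c ^+ 2))%:C)^-1 *: Hmat a b c in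
  is_hermitian H /\ is_psd H /\ H *m H^T = 0.
Proof.
move=> nz0 H.
have X2ge : 0 <= a^+2 + b^+2 + c^+2 by rewrite !addr_ge0 ?sqr_ge0.
have nz : a^+2 + b^+2 + c^+2 != 0.
  apply/negP => /eqP h; apply: nz0; exact: sq3 h.
have X2gt : 0 < a^+2 + b^+2 + c^+2 by rewrite lt_def nz.
have xpos : 0 < Num.sqrt (a^+2 + b^+2 + c^+2) by rewrite sqrtr_gt0.
have xnz : Num.sqrt (a^+2 + b^+2 + c^+2) != 0 by rewrite gt_eqF.
have hH : is_hermitian H.
  rewrite /is_hermitian /conjT /H; apply/matrixP => i j; rewrite !mxE conjE.
  rewrite -fmorphV /real_complex_def.
  set x := Num.sqrt _.
  case: (ord3P i) => [->|[->|->]]; case: (ord3P j) => [->|[->|->]] /=;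
    rewrite -/x; simpc; apply: ceq; ring.
have hHH : H *m H = (2 * Num.sqrt (a^+2 + b^+2 + c^+2))%:C *: H.
  rewrite /H -scalemxAl -scalemxAr Hmat_MM !scalerA -!fmorphV -!rmorphM.
  by congr (_%:C *: _); field.
split; first exact: hH.
split; last first.
  by rewrite /H [(_ *: _)^T]linearZ /= -scalemxAl -scalemxAr Hmat_MMT !scaler0.
clearbody H; move=> v.
have x2nz : 2 * Num.sqrt (a^+2 + b^+2 + c^+2) != 0 by rewrite mulf_neq0 ?pnatr_eq0.
have e : conjT v *m H *m v =
  ((2 * Num.sqrt (a^+2 + b^+2 + c^+2))^-1)%:C *: (conjT (H *m v) *m (H *m v)).
  rewrite conjT_mul hH mulmxA -[conjT v *m H *m H]mulmxA hHH -scalemxAr -scalemxAl.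
  by rewrite scalerA -rmorphM mulVf // rmorph1 scale1r.
rewrite e mxE mxE.
apply: mulr_ge0; first by rewrite ler0c invr_ge0 mulr_ge0 ?ler0n ?sqrtr_ge0.
apply: sumr_ge0 => k _; rewrite !mxE mulrC conjE; exact: mul_conjC_ge0.
Qed.

Theorem mainTheorem10 (R : realType) (H0 : 'M[R[i]]_3) :
  (is_hermitian H0 /\ is_psd H0 /\ H0 *m H0^T = 0) <->
  (H0 = 0 \/
   exists a b c : R, ~ (a = 0 /\ b = 0 /\ c = 0) /\
     H0 = ((Num.sqrt (a ^+ 2 + b ^+ 2 + c ^+ 2))%:C)^-1 *: Hmat a b c).
Proof.
split.
  by move=> [hH [hP hT]]; exact: forward.
case=> [->|[a [b [c [nz ->]]]]]; last exact: backward.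
split; [|split].
- by apply/matrixP => i j; rewrite !mxE conjE /=; simpc.
- by move=> v; rewrite mulmx0 mul0mx mxE.
- by rewrite mul0mx.
Qed.
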